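(* For every relaxed scenario $\mathscr{S}$, the strict orthology graph $\mathrm{sO}(\mathscr{S})$ is a cograph.
   Context: All trees are planted phylogenetic trees: a tree $T$ has a distinguished vertex $0_T$ of degree $1$ whose unique neighbor $\rho_T$ is the root, and every vertex other than $0_T$ and the leaves $L(T)$ has at least two children. For $x,y\in V(T)$ write $y\preceq_T x$ if $x$ lies on the path from $0_T$ to $y$; edges are written $uv$ with $v\prec_T u$. The order extends to $V(T)\cup E(T)$: for a vertex $x$ and an edge $e=uv$, $x\preceq_T e$ iff $x\preceq_T v$, and $e\preceq_T x$ iff $u\preceq_T x$; for edges, $uv\preceq_T ab$ iff $v\preceq_T b$. Two elements are comparable if one is $\preceq$ the other. $\mathrm{lca}_T$ denotes the last common ancestor. A time map for $T$ is $\tau_T\colon V(T)\to\mathbb{R}$ with $\tau_T(x)<\tau_T(y)$ whenever $x\prec_T y$. A relaxed scenario $\mathscr{S}=(T,S,\sigma,\mu,\tau_T,\tau_S)$ consists of a gene tree $T$ with time map $\tau_T$, a species tree $S$ with time map $\tau_S$, a map $\sigma\colon L(T)\to M$ with $M\subseteq L(S)$, and a map $\mu\colon V(T)\to V(S)\cup E(S)$ such that (S0) $\mu(x)=0_S$ iff $x=0_T$; (S1) $\mu(x)\in L(S)$ iff $x\in L(T)$, in which case $\mu(x)=\sigma(x)$; (S2) if $\mu(x)\in V(S)$ then $\tau_S(\mu(x))=\tau_T(x)$; (S3) if $\mu(x)=uv\in E(S)$ then $\tau_S(v)<\tau_T(x)<\tau_S(u)$. An edge $uv\in E(T)$ is an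 HGT-edge if $\mu(u)$ and $\mu(v)$ are incomparable in $S$. The strict orthology graph $\mathrm{sO}(\mathscr{S})$ has vertex set $L(T)$ and edges $xy$, $x\ne y$, such that $\mu(\mathrm{lca}_T(x,y))=\mathrm{lca}_S(\sigma(x),\sigma(y))$ and the path between $x$ and $y$ in $T$ contains no HGT-edge. A cograph is a graph with no induced path on four vertices. *)

(* Defs.v *)
From mathcomp Require Import all_boot.
From Stdlib Require Import Reals.

Set Implicit Arguments.
Unset Strict Implicit.
Unset Printing Implicit Defensive.

(** * Planted phylogenetic trees
    A tree on the finite vertex type [V] is given by its planted vertex [r0]
    (the vertex 0_T) and a parent map [par] with [par r0 = r0]; every vertex
    reaches [r0] by iterating [par]. *)

Section Trees.
Variable V : finType.
Variables (r0 : V) (par : V -> V).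

(** [anc y x] : y ⪯ x, i.e. x lies on the path from r0 to y. *)
Definition anc (y x : V) : Prop := exists n : nat, iter n par y = x.

Definition sanc (y x : V) : Prop := anc y x /\ y <> x.

Definition children (u : V) : {set V} := [set w | (w != r0) && (par w == u)].

Definition is_leaf (v : V) : bool := children v == set0.

Definition planted_tree : Prop :=
  par r0 = r0 /\
  (forall v : V, anc v r0) /\
  #|children r0| = 1%N /\
  (forall v : V, v <> r0 -> ~~ is_leaf v -> (2 <= #|children v|)%N).

Definition is_lca (x y z : V) : Prop :=
  anc x z /\ anc y z /\ (forall w, anc x w -> anc y w -> anc z w).

Definition time_map (tau : V -> R) : Prop :=
  forall x y : V, sanc x y -> (tau x < tau y)%R.

End Trees.

(** Elements of V(S) ∪ E(S): a vertex, or an edge uv (v ≺ u) represented by its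
    lower endpoint v (so u = par v); well-formed only if v <> 0_S. *)
Inductive loc (W : Type) : Type := LV of W | LE of W.
Arguments LV {W} _.
Arguments LE {W} _.

Section Loc.
Variable W : finType.
Variables (r0 : W) (par : W -> W).

Definition le_loc (a b : loc W) : Prop :=
  match a, b with
  | LV x, LV y => anc par x y
  | LV x, LE v => anc par x v          (* x ⪯ (par v) v  iff  x ⪯ v *)
  | LE v, LV x => anc par (par v) x    (* (par v) v ⪯ x  iff  par v ⪯ x *)
  | LE v, LE b => anc par v b          (* (par v) v ⪯ (par b) b iff v ⪯ b *)
  end.

Definition comparable_loc (a b : loc W) : Prop := le_loc a b \/ le_loc b a.

End Loc.

(** * Relaxed scenarios
    S = (T, S, σ, μ, τ_T, τ_S).  σ is given as a total map on V(T); only its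
    values on leaves of T matter (by (S1) they are leaves of S). *)
Definition relaxed_scenario (VT VS : finType)
    (r0T : VT) (parT : VT -> VT) (r0S : VS) (parS : VS -> VS)
    (sigma : VT -> VS) (mu : VT -> loc VS) (tauT : VT -> R) (tauS : VS -> R)
    : Prop :=
  planted_tree r0T parT /\
  planted_tree r0S parS /\
  time_map parT tauT /\
  time_map parS tauS /\
  (* μ maps into V(S) ∪ E(S): edge loci are genuine edges *)
  (forall x v, mu x = LE v -> v <> r0S) /\
  (forall x, mu x = LV r0S <-> x = r0T) /\
  (forall x, (exists s, mu x = LV s /\ is_leaf r0S parS s) <-> is_leaf r0T parT x) /\
  (forall x, is_leaf r0T parT x -> mu x = LV (sigma x)) /\
  (forall x s, mu x = LV s -> tauS s = tauT x) /\
  (forall x v, mu x = LE v -> (tauS v < tauT x)%R /\ (tauT x < tauS (parS v))%R).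

(** HGT-edge uv of T (represented by its lower endpoint v <> 0_T). *)
Definition hgt_edge (VT VS : finType) (parT : VT -> VT) (parS : VS -> VS)
    (mu : VT -> loc VS) (v : VT) : Prop :=
  ~ comparable_loc parS (mu (parT v)) (mu v).

(** The edges of the x–y path are the edges (par v) v with v ⪯ x or v ⪯ y and
    v strictly below lca_T(x,y). *)
Definition sO_edge (VT VS : finType)
    (parT : VT -> VT) (parS : VS -> VS)
    (sigma : VT -> VS) (mu : VT -> loc VS) (x y : VT) : Prop :=
  x <> y /\
  exists z : VT, is_lca parT x y z /\
    (exists s : VS, is_lca parS (sigma x) (sigma y) s /\ mu z = LV s) /\
    (forall v : VT, (anc parT x v \/ anc parT y v) -> sanc parT v z ->
                    ~ hgt_edge parT parS mu v).

Definition cograph (T : eqType) (vert : T -> Prop) (adj : T -> T -> Prop) : Prop :=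
  ~ exists a b c d : T,
      [/\ vert a, vert b, vert c & vert d] /\ uniq [:: a; b; c; d] /\
      [/\ adj a b, adj b c & adj c d] /\
      [/\ ~ adj a c, ~ adj b d & ~ adj a d].

(* Main.v *)
Require Import Defs.
From mathcomp Require Import all_boot.
From Stdlib Require Import Reals Lra Lia Classical.
From mathcomp Require Import zify.
Set Implicit Arguments.
Unset Strict Implicit.

Section TreeFacts.
Variable V : finType.
Variable par : V -> V.

Lemma anc_refl x : anc par x x.
Proof. by exists 0%nat. Qed.

Lemma anc_trans x y z : anc par x y -> anc par y z -> anc par x z.
Proof. move=> [n <-] [m <-]; exists (m + n)%nat; by rewrite iterD. Qed.

Lemma anc_par x : anc par x (par x).
Proof. by exists 1%nat. Qed.

Lemma anc_par_strict a b : anc par a b -> a <> b -> anc par (par a) b.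
Proof.
move=> [[|n] Hn] Hab; first by rewrite /= in Hn.
by exists n; rewrite -iterSr.
Qed.

Lemma anc_chain x y z : anc par x y -> anc par x z -> anc par y z \/ anc par z y.
Proof.
move=> [n <-] [m <-].
destruct (Nat.le_ge_cases n m) as [H|H].
- left; exists (m - n)%nat; rewrite -iterD; congr iter; lia.
- right; exists (n - m)%nat; rewrite -iterD; congr iter; lia.
Qed.

Lemma least_nat (P : nat -> Prop) : (exists n, P n) -> exists n, P n /\ forall m, P m -> le n m.
Proof.
move=> [n Hn].
apply NNPP => Hno.
have H : forall k, forall m, le m k -> ~ P m.
  elim=> [|k IH] m Hm Pm.
  - apply: Hno; exists m; split => // m' _; lia.
  - destruct (Nat.eq_dec m k.+1) as [->|Hne]; last by apply: (IH m) => //; lia.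
    apply: Hno; exists k.+1; split => // m' Pm'.
    destruct (Nat.le_gt_cases k.+1 m') => //.
    exfalso; apply: (IH m') => //; lia.
by apply: (H n n).
Qed.

Lemma lca_exists r0 x y : (forall v, anc par v r0) -> exists z, is_lca par x y z.
Proof.
move=> Hr.
have [n [Hn Hmin]] : exists n, anc par y (iter n par x) /\ forall m, anc par y (iter m par x) -> le n m.
  apply: least_nat.
  have [k Hk] := Hr x.
  by exists k; rewrite Hk.
exists (iter n par x); split; first by exists n.
split => // w [m Hm] Hw.
subst w; have Hle := Hmin m Hw.
exists (m - n)%nat; rewrite -iterD; congr iter; lia.
Qed.

Variable tau : V -> R.
Hypothesis Ht : time_map par tau.

Lemma tau_mono x y : anc par x y -> (tau x <= tau y)%R.
Proof.
move=> H; case: (eqVneq x y) => [->|Hne]; first lra.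
apply: Rlt_le; apply: Ht; split => //; exact/eqP.
Qed.

Lemma anc_antisym x y : anc par x y -> anc par y x -> x = y.
Proof.
move=> H1 H2; case: (eqVneq x y) => [//|/eqP Hne].
have Hne' : y <> x by auto.
have := Ht (conj H1 Hne); have := Ht (conj H2 Hne'); lra.
Qed.

Lemma lca_unique x y z z' : is_lca par x y z -> is_lca par x y z' -> z = z'.
Proof.
move=> [H1 [H2 H3]] [H1' [H2' H3']].
apply: anc_antisym; [exact: H3 | exact: H3'].
Qed.

End TreeFacts.

Section LocFacts.
Variable W : finType.
Variable par : W -> W.

Lemma le_loc_refl a : le_loc par a a.
Proof. case: a => x; exact: anc_refl. Qed.

Lemma le_loc_trans a b c : le_loc par a b -> le_loc par b c -> le_loc par a c.
Proof.
case: a => [x|x]; case: b => [y|y]; case: c => [z|z] /=.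
- exact: anc_trans.
- exact: anc_trans.
- move=> H1 H2; apply: (anc_trans H1); apply: (anc_trans (anc_par _ _) H2).
- exact: anc_trans.
- exact: anc_trans.
- move=> H1 H2; apply: (anc_trans (anc_par _ _)); apply: (anc_trans H1 H2).
- move=> H1 H2; case: (eqVneq x y) => [->//|/eqP Hne].
  apply: (anc_trans (anc_par_strict H1 Hne)); apply: (anc_trans (anc_par _ _) H2).
- exact: anc_trans.
Qed.

End LocFacts.

Section Scen.
Variables VT VS : finType.
Variables (r0T : VT) (parT : VT -> VT) (r0S : VS) (parS : VS -> VS)
    (sigma : VT -> VS) (mu : VT -> loc VS) (tauT : VT -> R) (tauS : VS -> R).
Hypothesis Hsc : relaxed_scenario r0T parT r0S parS sigma mu tauT tauS.

Let HtT : time_map parT tauT. Proof. by case: Hsc => [_ [_ [H _]]]. Qed.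
Let HtS : time_map parS tauS. Proof. by case: Hsc => [_ [_ [_ [H _]]]]. Qed.
Let HrT : forall v, anc parT v r0T. Proof. by case: Hsc => [[_ [H _]] _]. Qed.
Let HrS : forall v, anc parS v r0S. Proof. by case: Hsc => [_ [[_ [H _]] _]]. Qed.
Let Hleaf : forall x, is_leaf r0T parT x -> mu x = LV (sigma x).
Proof. by case: Hsc => [_ [_ [_ [_ [_ [_ [_ [H _]]]]]]]]. Qed.
Let HS2 : forall x s, mu x = LV s -> tauS s = tauT x.
Proof. by case: Hsc => [_ [_ [_ [_ [_ [_ [_ [_ [H _]]]]]]]]]. Qed.
Let HS3 : forall x v, mu x = LE v -> (tauS v < tauT x)%R /\ (tauT x < tauS (parS v))%R.
Proof. by case: Hsc => [_ [_ [_ [_ [_ [_ [_ [_ [_ H]]]]]]]]]. Qed.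

Let hgt v := hgt_edge parT parS mu v.
Let clean_up x Z := forall v, anc parT x v -> sanc parT v Z -> ~ hgt v.

Lemma tauT_par w : w <> parT w -> (tauT w < tauT (parT w))%R.
Proof. move=> H; apply: HtT; split => //; exact: anc_par. Qed.

Lemma Dir w : w <> parT w -> comparable_loc parS (mu (parT w)) (mu w) ->
  le_loc parS (mu w) (mu (parT w)).
Proof.
move=> Hw [H|//].
have Ht := tauT_par Hw.
case Ep: (mu (parT w)) H => [a|e]; case Ew: (mu w) => [b|f] /= H.
- exfalso; have := HS2 Ep; have := HS2 Ew; have := tau_mono HtS H; lra.
- exfalso; have := HS2 Ep; have := HS3 Ew; have := tau_mono HtS H; lra.
- exfalso; have := HS3 Ep; have := HS2 Ew; have := tau_mono HtS H; lra.
- case: (eqVneq e f) => [Eef|/eqP Hne].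
  + by rewrite /= Eef; apply: anc_refl.
  + exfalso; have := HS3 Ep; have := HS3 Ew; have := tau_mono HtS (anc_par_strict H Hne); lra.
Qed.

Lemma Mono x Z : clean_up x Z -> forall u w, anc parT x u -> anc parT u w -> anc parT w Z ->
  le_loc parS (mu u) (mu w).
Proof.
move=> Hc u w Hxu [k <-]; elim: k => [|k IH] /= HZ; first exact: le_loc_refl.
set w' := iter k parT u in IH HZ *.
have HwZ : anc parT w' Z := anc_trans (anc_par _ _) HZ.
have {}IH := IH HwZ.
case: (eqVneq w' (parT w')) => [<-//|/eqP Hne].
apply: (le_loc_trans IH); apply: Dir => //.
have Hs : sanc parT w' Z.
  split => // E; apply: Hne; apply: (anc_antisym HtT (anc_par _ _)); by rewrite {2}E.
have Hxw : anc parT x w' by apply: (anc_trans Hxu); exists k.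
have := Hc _ Hxw Hs; rewrite /hgt /hgt_edge.
by move/NNPP.
Qed.

Lemma below_ne w Z S' : anc parT w Z -> w <> Z -> mu Z = LV S' -> mu w <> LV S'.
Proof.
move=> H1 H2 HZ Hw.
have := HS2 HZ; have := HS2 Hw; have := HtT (conj H1 H2); lra.
Qed.

Lemma Conv w p q S' : le_loc parS (LV p) (mu w) -> le_loc parS (LV q) (mu w) ->
  le_loc parS (mu w) (LV S') -> mu w <> LV S' ->
  exists u, anc parS u S' /\ u <> S' /\ anc parS p u /\ anc parS q u.
Proof.
case Ew: (mu w) => [u|e] /= Hp Hq HS Hne.
- exists u; split => //; split => //; by move=> E; apply: Hne; rewrite E.
- exists e; split; first exact: (anc_trans (anc_par _ _) HS).
  split => //.
  move=> E; subst e.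
  have [H1 H2] := HS3 Ew.
  have := anc_antisym HtS (anc_par _ _) HS => E.
  rewrite -E in H2; lra.
Qed.

Lemma sanc_trans_r v z Z : sanc parT v z -> anc parT z Z -> sanc parT v Z.
Proof.
move=> [H1 H2] H3; split; first exact: anc_trans H1 H3.
move=> E; subst Z; apply: H2; apply: (anc_antisym HtT); [exact: H1 | exact: H3].
Qed.

Lemma LemT x y Z S' : is_leaf r0T parT x -> is_leaf r0T parT y -> x <> y ->
  ~ sO_edge parT parS sigma mu x y -> mu Z = LV S' -> clean_up x Z -> clean_up y Z ->
  anc parT x Z -> anc parT y Z ->
  exists u, anc parS u S' /\ u <> S' /\ anc parS (sigma x) u /\ anc parS (sigma y) u.
Proof.
move=> Lx Ly Hxy Hne HZ Cx Cy HxZ HyZ.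
have [z0 Hz0] := lca_exists x y HrT.
have [Hxz0 [Hyz0 Hz0m]] := Hz0.
have Hz0Z := Hz0m _ HxZ HyZ.
have MxZ := Mono Cx (anc_refl _ _) HxZ (anc_refl _ _).
have MyZ := Mono Cy (anc_refl _ _) HyZ (anc_refl _ _).
rewrite HZ (Hleaf Lx) /= in MxZ; rewrite HZ (Hleaf Ly) /= in MyZ.
case: (eqVneq z0 Z) => [E|/eqP Hz0ne].
- subst z0.
  have [s0 Hs0] := lca_exists (sigma x) (sigma y) HrS.
  have [Hxs0 [Hys0 Hs0m]] := Hs0.
  have HS0 := Hs0m _ MxZ MyZ.
  exists s0; split => //; split => //.
  move=> E; subst s0; apply: Hne; split => //.
  exists Z; split => //; split; first by exists S'.
  move=> v [Hv|Hv] Hs; [exact: Cx Hv Hs | exact: Cy Hv Hs].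
- have Mx := Mono Cx (anc_refl _ _) Hxz0 Hz0Z.
  have My := Mono Cy (anc_refl _ _) Hyz0 Hz0Z.
  have Mz := Mono Cx Hxz0 Hz0Z (anc_refl _ _).
  rewrite (Hleaf Lx) in Mx; rewrite (Hleaf Ly) in My; rewrite HZ in Mz.
  apply: (Conv Mx My Mz).
  exact: below_ne Hz0Z Hz0ne HZ.
Qed.


Definition Edata x y z s := is_lca parT x y z /\ is_lca parS (sigma x) (sigma y) s /\
  mu z = LV s /\ (forall v, (anc parT x v \/ anc parT y v) -> sanc parT v z -> ~ hgt v).

Lemma edge_data x y : sO_edge parT parS sigma mu x y -> exists z s, Edata x y z s.
Proof. move=> [_ [z [Hz [[s [Hs Hm]] Hc]]]]; by exists z, s. Qed.

Lemma lca_sym (V : finType) (p : V -> V) x y z : is_lca p x y z -> is_lca p y x z.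
Proof. by move=> [H1 [H2 H3]]; split => //; split => // w A B; apply: H3. Qed.

Lemma Edata_sym x y z s : Edata x y z s -> Edata y x z s.
Proof.
move=> [H1 [H2 [H3 H4]]]; split; first exact: lca_sym.
split; first exact: lca_sym.
split => // v Hv; apply: H4; tauto.
Qed.

Lemma sO_sym x y : sO_edge parT parS sigma mu x y -> sO_edge parT parS sigma mu y x.
Proof.
move=> [Hxy [z [Hz [[s [Hs Hm]] Hc]]]]; split; first by auto.
exists z; split; first exact: lca_sym.
split; first by exists s; split => //; apply: lca_sym.
move=> v Hv; apply: Hc; tauto.
Qed.

Lemma Half x y w z1 s1 z2 s2 : is_leaf r0T parT x -> is_leaf r0T parT y -> is_leaf r0T parT w ->
  x <> w -> Edata x y z1 s1 -> Edata y w z2 s2 -> ~ sO_edge parT parS sigma mu x w ->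
  sanc parT z2 z1 -> False.
Proof.
move=> Lx Ly Lw Hxw [[Hx1 [Hy1 _]] [[Hsx1 [Hsy1 Hs1m]] [Hm1 C1]]]
  [[Hy2 [Hw2 _]] [[Hsy2 [Hsw2 _]] [Hm2 C2]]] Hne [H21 H21ne].
have Cx : clean_up x z1 by move=> v Hv; apply: C1; left.
have Cy : clean_up y z1 by move=> v Hv; apply: C1; right.
have Cw : clean_up w z1.
  move=> v Hwv Hv.
  have [Hvz2|Hz2v] := anc_chain Hwv Hw2.
  - case: (eqVneq v z2) => [E|/eqP Hvne].
    + apply: C1 Hv; right; rewrite E; exact: Hy2.
    + apply: C2; [by right | by split].
  - apply: C1 Hv; right; exact: anc_trans Hy2 Hz2v.
have [u [Hu1 [Hu2 [Hu3 Hu4]]]] := LemT Lx Lw Hxw Hne Hm1 Cx Cw Hx1 (anc_trans Hw2 H21).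
have M := Mono Cy Hy2 H21 (anc_refl _ _).
rewrite Hm1 Hm2 /= in M.
have Hs21 : s2 <> s1.
  move=> E; apply: (below_ne H21 H21ne Hm1); by rewrite Hm2 E.
have [Hus2|Hs2u] := anc_chain Hu4 Hsw2.
- apply: Hs21; apply: (anc_antisym HtS) => //.
  apply: Hs1m => //; exact: anc_trans Hu3 Hus2.
- apply: Hu2; apply: (anc_antisym HtS) => //.
  apply: Hs1m => //; exact: anc_trans Hsy2 Hs2u.
Qed.

Lemma Claim x y w z1 s1 z2 s2 : is_leaf r0T parT x -> is_leaf r0T parT y -> is_leaf r0T parT w ->
  x <> w -> Edata x y z1 s1 -> Edata y w z2 s2 -> ~ sO_edge parT parS sigma mu x w ->
  z1 = z2.
Proof.
move=> Lx Ly Lw Hxw E1 E2 Hne.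
have Hy1 : anc parT y z1 by case: E1 => [[_ [H _]] _].
have Hy2 : anc parT y z2 by case: E2 => [[H _] _].
case: (eqVneq z1 z2) => [//|/eqP Hz].
exfalso.
have [H|H] := anc_chain Hy1 Hy2.
- apply: (Half Lw Ly Lx _ (Edata_sym E2) (Edata_sym E1)).
  + by auto.
  + by move/sO_sym.
  + by split.
- apply: (Half Lx Ly Lw Hxw E1 E2 Hne); split => //; by auto.
Qed.

Lemma Main : cograph (fun x : VT => is_leaf r0T parT x) (sO_edge parT parS sigma mu).
Proof.
move=> [a [b [c [d [[La Lb Lc Ld] [Hu [[Eab Ebc Ecd] [Nac Nbd Nad]]]]]]]].
have Hac : a <> c by move=> E; subst; rewrite /= !inE eqxx ?orbT in Hu.
have Had : a <> d by move=> E; subst; rewrite /= !inE eqxx ?orbT in Hu.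
have Hbd : b <> d by move=> E; subst; rewrite /= !inE eqxx ?orbT ?andbF in Hu.
have [z1 [s1 D1]] := edge_data Eab.
have [z2 [s2 D2]] := edge_data Ebc.
have [z3 [s3 D3]] := edge_data Ecd.
have E12 := Claim La Lb Lc Hac D1 D2 Nac.
have E23 := Claim Lb Lc Ld Hbd D2 D3 Nbd.
subst z2 z3.
move: D1 D2 D3 => [[Ha1 [Hb1 _]] [[Hsa1 [Hsb1 _]] [Hm1 C1]]]
  [[_ [Hc2 _]] [_ [Hm2 C2]]] [[_ [Hd3 _]] [[Hsc3 [Hsd3 Hs3m]] [Hm3 C3]]].
have E2 : s2 = s1 by rewrite Hm1 in Hm2; case: Hm2.
have E3 : s3 = s1 by rewrite Hm1 in Hm3; case: Hm3.
subst s2 s3.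
have Ca : clean_up a z1 by move=> v Hv; apply: C1; left.
have Cc : clean_up c z1 by move=> v Hv; apply: C2; right.
have Cd : clean_up d z1 by move=> v Hv; apply: C3; right.
have [u1 [Hu1 [Hu1ne [Hau1 Hcu1]]]] := LemT La Lc Hac Nac Hm1 Ca Cc Ha1 Hc2.
have [u2 [Hu2 [Hu2ne [Hau2 Hdu2]]]] := LemT La Ld Had Nad Hm1 Ca Cd Ha1 Hd3.
have [H|H] := anc_chain Hau1 Hau2.
- apply: Hu2ne; apply: (anc_antisym HtS) => //.
  apply: Hs3m => //; exact: anc_trans Hcu1 H.
- apply: Hu1ne; apply: (anc_antisym HtS) => //.
  apply: Hs3m => //; exact: anc_trans Hdu2 H.
Qed.

End Scen.

Theorem lemma35 (VT VS : finType)
    (r0T : VT) (parT : VT -> VT) (r0S : VS) (parS : VS -> VS)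
    (sigma : VT -> VS) (mu : VT -> loc VS) (tauT : VT -> R) (tauS : VS -> R) :
  relaxed_scenario r0T parT r0S parS sigma mu tauT tauS ->
  cograph (fun x : VT => is_leaf r0T parT x) (sO_edge parT parS sigma mu).
Proof. move=> H; exact: Main H. Qed.
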